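(* Let $X,Y,Z$ be random variables on finite alphabets $\mathcal{X},\mathcal{Y},\mathcal{Z}$. For each $y\in\mathcal{Y}$ with $\Pr(Y=y)>0$, let $(A_y,B_y,C_y)$ be the random triple on $\mathcal{X}\times\mathcal{Y}\times\mathcal{Z}$ with $\Pr(A_y=x,B_y=y',C_y=z)=0$ if $\Pr(Z=z)=0$ and $=\Pr(X=x,Y=y',Z=z)\Pr(Z=z\mid Y=y)/\Pr(Z=z)$ otherwise; and for each $x\in\mathcal{X}$ with $\Pr(X=x)>0$, let $(A_x,B_x,C_x)$ be the random triple on $\mathcal{X}\times\mathcal{Y}\times\mathcal{Z}$ with $\Pr(A_x=x',B_x=y,C_x=z)=0$ if $\Pr(Z=z)=0$ and $=\Pr(X=x',Y=y,Z=z)\Pr(Z=z\mid X=x)/\Pr(Z=z)$ otherwise. Let $(A_{Z|Y},Y)$ be the pair on $\mathcal{X}\times\mathcal{Y}$ with $\Pr(A_{Z|Y}=x,Y=y)=\Pr(Y=y)\Pr(A_y=x)$ (and $0$ if $\Pr(Y=y)=0$), and let $(X,B_{Z|X})$ be the pair on $\mathcal{X}\times\mathcal{Y}$ with $\Pr(X=x,B_{Z|X}=y)=\Pr(X=x)\Pr(B_x=y)$ (and $0$ if $\Pr(X=x)=0$). Then $I(A_{Z|Y};Y)=I(X;B_{Z|X})$.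
   Context: $I$ denotes mutual information. *)

(* Defs.v *)
From HB Require Import structures.
From mathcomp Require Import all_boot all_order all_algebra.
From mathcomp Require Import reals exp.
Set Implicit Arguments. Unset Strict Implicit. Unset Printing Implicit Defensive.
Import Order.TTheory GRing.Theory Num.Theory.
Local Open Scope ring_scope.

Section Defs.
Variable R : realType.

Definition is_pmf (T : finType) (p : T -> R) :=
  (forall t, 0 <= p t) /\ \sum_t p t = 1.

Definition mutual_info (X Y : finType) (q : X -> Y -> R) : R :=
  \sum_x \sum_y
    (if q x y == 0 then 0
     else q x y * ln (q x y / ((\sum_y' q x y') * (\sum_x' q x' y)))).

Variables (X Y Z : finType) (p : X -> Y -> Z -> R).

Definition pX x := \sum_y \sum_z p x y z.
Definition pY y := \sum_x \sum_z p x y z.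
Definition pZ z := \sum_x \sum_y p x y z.
Definition pYZ y z := \sum_x p x y z.
Definition pXZ x z := \sum_y p x y z.

Definition pZgY z y := pYZ y z / pY y.
Definition pZgX z x := pXZ x z / pX x.

Definition tripY (y : Y) (x : X) (y' : Y) (z : Z) : R :=
  if pZ z == 0 then 0 else p x y' z * pZgY z y / pZ z.
Definition tripX (x : X) (x' : X) (y : Y) (z : Z) : R :=
  if pZ z == 0 then 0 else p x' y z * pZgX z x / pZ z.

Definition PrA (y : Y) (x : X) := \sum_y' \sum_z tripY y x y' z.
Definition PrB (x : X) (y : Y) := \sum_x' \sum_z tripX x x' y z.

Definition pAZY (x : X) (y : Y) : R := if pY y == 0 then 0 else pY y * PrA y x.
Definition pXBZX (x : X) (y : Y) : R := if pX x == 0 then 0 else pX x * PrB x y.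

End Defs.

(* Main.v *)
Require Import Defs.
From HB Require Import structures.
From mathcomp Require Import all_boot all_order all_algebra.
From mathcomp Require Import reals exp.
From mathcomp Require Import ring lra.
From Stdlib Require Import FunctionalExtensionality.
Import Order.TTheory GRing.Theory Num.Theory.
Local Open Scope ring_scope.

Section L.
Variables (R : realType) (X Y Z : finType) (p : X -> Y -> Z -> R).
Hypothesis p0 : forall x y z, 0 <= p x y z.

Lemma pX0 x : pX p x = 0 -> forall y z, p x y z = 0.
Proof.
move=> h y z.
have h1 := @psumr_eq0P _ _ _ _ (fun y _ => sumr_ge0 _ (fun z _ => p0 x y z)) h y isT.
exact: (@psumr_eq0P _ _ _ _ (fun z _ => p0 x y z) h1 z isT).
Qed.

Lemma pY0 y : pY p y = 0 -> forall x z, p x y z = 0.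
Proof.
move=> h x z.
have h1 := @psumr_eq0P _ _ _ _ (fun x _ => sumr_ge0 _ (fun z _ => p0 x y z)) h x isT.
exact: (@psumr_eq0P _ _ _ _ (fun z _ => p0 x y z) h1 z isT).
Qed.

Lemma PrA_eq x y : pY p y != 0 -> pY p y * PrA p y x =
  \sum_z (if pZ p z == 0 then 0 else pXZ p x z * pYZ p y z / pZ p z).
Proof.
move=> hy; rewrite /PrA exchange_big mulr_sumr; apply: eq_bigr => z _.
rewrite /tripY; case: ifP => hz; first by rewrite big1 ?mulr0.
move/negbT: hz => hz.
rewrite -mulr_suml -mulr_suml /pXZ /pZgY.
field; by rewrite hz hy.
Qed.

Lemma PrB_eq x y : pX p x != 0 -> pX p x * PrB p x y =
  \sum_z (if pZ p z == 0 then 0 else pXZ p x z * pYZ p y z / pZ p z).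
Proof.
move=> hx; rewrite /PrB exchange_big mulr_sumr; apply: eq_bigr => z _.
rewrite /tripX; case: ifP => hz; first by rewrite big1 ?mulr0.
move/negbT: hz => hz.
rewrite -mulr_suml -mulr_suml /pYZ /pZgX.
field; by rewrite hz hx.
Qed.

Lemma PrA0 x y : pX p x = 0 -> PrA p y x = 0.
Proof.
move=> h; rewrite /PrA big1 // => y' _; rewrite big1 // => z _.
by rewrite /tripY (pX0 _ h) !mul0r; case: ifP.
Qed.

Lemma PrB0 x y : pY p y = 0 -> PrB p x y = 0.
Proof.
move=> h; rewrite /PrB big1 // => x' _; rewrite big1 // => z _.
by rewrite /tripX (pY0 _ h) !mul0r; case: ifP.
Qed.

Lemma pAB : pAZY p = pXBZX p.
Proof.
apply: functional_extensionality => x; apply: functional_extensionality => y.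
rewrite /pAZY /pXBZX.
case: (eqVneq (pY p y) 0) => hy; case: (eqVneq (pX p x) 0) => hx //.
- by rewrite PrB0 ?mulr0.
- by rewrite PrA0 ?mulr0.
- by rewrite PrA_eq // PrB_eq.
Qed.
End L.

Theorem lemma7 (R : realType) (X Y Z : finType) (p : X -> Y -> Z -> R)
  (hp : is_pmf (fun t : X * Y * Z => p t.1.1 t.1.2 t.2)) :
  mutual_info (pAZY p) = mutual_info (pXBZX p).
Proof.
have p0 : forall x y z, 0 <= p x y z by move=> x y z; exact: (hp.1 (x, y, z)).
by rewrite (@pAB _ _ _ _ p p0).
Qed.
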